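(* Let $G$ be a $(\Delta+1)$-graph and let $H$ be a subgraph of a regular $(\Delta+1)$-graph $H'$ such that $$\Delta(G)+1\ \ge\ \Delta(H')-\Delta(H).$$ Then $\chi_i(G\,\square\, H)\le \Delta(G\,\square\, H)+2$.
   Context: All graphs are finite and simple. An incidence of a graph $G$ is a pair $(v,e)$ with $v\in V(G)$, $e\in E(G)$ and $v\in e$. Two incidences $(v,e)$ and $(u,f)$ are adjacent if $v=u$, or $e=f$, or $vu\in\{e,f\}$. An incidence coloring of $G$ assigns colors to all incidences so that adjacent incidences receive distinct colors. $\chi_i(G)$ is the least number of colors in an incidence coloring of $G$. $\Delta(G)$ denotes the maximum degree. For a positive integer $k$, $G$ is a $(\Delta+k)$-graph if it admits an incidence coloring with at most $\Delta(G)+k$ colors. $G\,\square\,H$ denotes the Cartesian product: vertex set $V(G)\times V(H)$, with $(u,v)\sim(u',v')$ iff ($uu'\in E(G)$ and $v=v'$) or ($u=u'$ and $vv'\in E(H)$). *)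

(* Defs.v *)
From mathcomp Require Import all_boot.
Set Implicit Arguments. Unset Strict Implicit. Unset Printing Implicit Defensive.

Record sgraph := SGraph {
  svert :> finType;
  sadj : rel svert;
  sadj_sym : symmetric sadj;
  sadj_irr : irreflexive sadj }.

Definition deg (G : sgraph) (v : G) : nat := #|[set w | sadj v w]|.
Definition maxdeg (G : sgraph) : nat := \max_(v : G) deg v.

Definition regular (G : sgraph) : Prop := forall v w : G, deg v = deg w.

(* H is a subgraph of H' (up to isomorphism): an injective adjacency-preserving
   map from V(H) into V(H'). *)
Definition subgraph (H H' : sgraph) : Prop :=
  exists f : svert H -> svert H', injective f /\ forall x y, sadj x y -> sadj (f x) (f y).

Definition edge (G : sgraph) (v w : G) : {set G} := [set v; w].

(* An incidence (v, e) with e = vw is represented by the ordered pair (v, w)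
   with sadj v w.  Adjacency of incidences (v,vw) and (u,ux):
   v = u, or vw = ux, or the edge vu is one of vw, ux. *)
Definition inc_adj (G : sgraph) (v w u x : G) : bool :=
  [|| v == u, edge v w == edge u x, edge v u == edge v w | edge v u == edge u x].

(* The coloring
   is a finite function on all ordered pairs (values at non-incidences are
   irrelevant); its codomain 'I_k.+1 is just a finite container, the colors
   actually used on incidences are required to be < k. *)
Definition incidence_coloring (G : sgraph) (k : nat)
    (c : {ffun svert G * svert G -> 'I_k.+1}) : bool :=
  [forall v : G, forall w : G, sadj v w ==> (c (v, w) < k)] &&
  [forall v : G, forall w : G, forall u : G, forall x : G,
     [&& sadj v w, sadj u x, (v, w) != (u, x) & inc_adj v w u x]
       ==> (c (v, w) != c (u, x))].

Definition incidence_colorable (G : sgraph) (k : nat) : bool :=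
  [exists c, @incidence_coloring G k c].

Lemma incidence_colorable_exists (G : sgraph) :
  exists k, incidence_colorable G k.
Proof.
exists #|{: G * G}|; apply/existsP.
exists [ffun p => widen_ord (leqnSn _) (enum_rank p)].
apply/andP; split.
  by apply/forallP=> v; apply/forallP=> w; rewrite ffunE /= ltn_ord implybT.
apply/forallP=> v; apply/forallP=> w; apply/forallP=> u; apply/forallP=> x.
apply/implyP=> /and4P [_ _ ne _]; rewrite !ffunE.
apply/negP=> /eqP /(congr1 val) /= /val_inj /enum_rank_inj E.
by rewrite E eqxx in ne.
Qed.

Definition chi_i (G : sgraph) : nat :=
  ex_minn (@incidence_colorable_exists G).

Definition delta_plus_graph (k : nat) (G : sgraph) : Prop :=
  incidence_colorable G (maxdeg G + k).

Definition cart_adj (G H : sgraph) : rel (G * H) :=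
  fun p q => (sadj p.1 q.1 && (p.2 == q.2)) || ((p.1 == q.1) && sadj p.2 q.2).

Lemma cart_adj_sym (G H : sgraph) : symmetric (@cart_adj G H).
Proof.
move=> [a b] [c d]; rewrite /cart_adj /= (sadj_sym a c) (sadj_sym b d).
by rewrite (eq_sym b d) (eq_sym a c).
Qed.

Lemma cart_adj_irr (G H : sgraph) : irreflexive (@cart_adj G H).
Proof. by move=> [a b]; rewrite /cart_adj /= !sadj_irr !andbF. Qed.

Definition cart (G H : sgraph) : sgraph :=
  @SGraph (G * H)%type (@cart_adj G H) (@cart_adj_sym G H) (@cart_adj_irr G H).

(* Main.v *)
Require Import Defs.
From mathcomp Require Import all_boot.
From mathcomp Require Import zify.
Set Implicit Arguments. Unset Strict Implicit. Unset Printing Implicit Defensive.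

Lemma edge_eq (T : finType) (a b c d : T) : a != b ->
  ([set a; b] == [set c; d]) = ((a == c) && (b == d)) || ((a == d) && (b == c)).
Proof.
move=> nab; apply/eqP/idP.
  move=> E.
  have: a \in [set c; d] by rewrite -E !inE eqxx.
  have: b \in [set c; d] by rewrite -E !inE eqxx orbT.
  have: c \in [set a; b] by rewrite E !inE eqxx.
  have: d \in [set a; b] by rewrite E !inE eqxx orbT.
  rewrite !inE => h4 h3 h2 h1.
  move: h1 h2 h3 h4.
  case: (a =P c); case: (a =P d); case: (b =P c); case: (b =P d);
    move=> //= *; subst; by move: nab; rewrite ?eqxx.
by case/orP=> /andP[/eqP-> /eqP->] //; rewrite setUC.
Qed.

Lemma inc_adjE (G : sgraph) (v w u x : G) : sadj v w -> sadj u x ->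
  inc_adj v w u x = [|| v == u, w == u | v == x].
Proof.
move=> hvw hux.
have nvw : v != w by apply/eqP=> E; move: hvw; rewrite E sadj_irr.
have nux : u != x by apply/eqP=> E; move: hux; rewrite E sadj_irr.
rewrite /inc_adj /edge.
case: (v =P u) => [//|nvu].
have nvu' : v != u by apply/eqP.
rewrite !edge_eq //.
rewrite (negbTE nvu') !eqxx /= (eq_sym u w) (negbTE nvw).
by case: (v == x); case: (w == u); rewrite ?andbF ?andbT ?orbT ?orbF.
Qed.

Lemma colB (G : sgraph) k (c : {ffun G * G -> 'I_k.+1}) : incidence_coloring c ->
  forall v w : G, sadj v w -> c (v, w) < k.
Proof. by case/andP=> /forallP h _ v w hvw; move/forallP: (h v) => /(_ w) /implyP; apply. Qed.

Lemma colP (G : sgraph) k (c : {ffun G * G -> 'I_k.+1}) : incidence_coloring c ->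
  forall v w u x : G, sadj v w -> sadj u x -> (v, w) != (u, x) ->
  [|| v == u, w == u | v == x] -> c (v, w) != c (u, x).
Proof.
case/andP=> _ /forallP h v w u x hvw hux ne hi.
move/forallP: (h v) => /(_ w) /forallP /(_ u) /forallP /(_ x) /implyP; apply.
by rewrite hvw hux ne inc_adjE.
Qed.

Lemma maxdeg_ge (G : sgraph) (v : G) : deg v <= maxdeg G.
Proof. exact: (@leq_bigmax_cond G xpredT (fun w : G => deg w) v). Qed.

Lemma regular_deg (G : sgraph) : regular G -> forall w : G, deg w = maxdeg G.
Proof.
move=> reg w; apply/eqP; rewrite eqn_leq maxdeg_ge /=.
by apply/bigmax_leqP=> i _; rewrite (reg i w).
Qed.

Lemma missing (G : sgraph) (c : {ffun G * G -> 'I_(maxdeg G + 1).+1}) :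
  regular G -> incidence_coloring c ->
  forall w y y' : G, sadj y w -> sadj y' w -> c (y, w) = c (y', w).
Proof.
move=> reg hc w y y' hy hy'.
set O := [set c (w, x) | x in [set x | sadj w x]].
have cO : #|O| = maxdeg G.
  rewrite card_in_imset; first by rewrite -(regular_deg reg w).
  move=> x1 x2; rewrite !inE => h1 h2 E; apply/eqP; apply/negPn/negP => nx.
  have H1 : (w, x1) != (w, x2) by rewrite xpair_eqE eqxx.
  by have := colP hc h1 h2 H1; rewrite eqxx E eqxx => /(_ isT).
have notO z : sadj z w -> c (z, w) \notin O.
  move=> hz; apply/imsetP => -[x]; rewrite inE => hx E.
  have nzw : z != w by apply/eqP=> E'; move: hz; rewrite E' sadj_irr.
  have H1 : (z, w) != (w, x) by rewrite xpair_eqE (negbTE nzw).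
  by have := colP hc hz hx H1; rewrite eqxx orbT E eqxx => /(_ isT).
have notM z : sadj z w -> c (z, w) != ord_max.
  move=> hz; apply/eqP => E; have := colB hc hz; rewrite E /= ltnn //.
apply/eqP; apply/negPn/negP => n12.
have sub : c (y, w) |: (c (y', w) |: O) \subset [set~ ord_max].
  apply/subsetP => z; rewrite !inE => /orP[/eqP->|/orP[/eqP->|zO]].
  - exact: notM.
  - exact: notM.
  - by apply/eqP => E; move: zO; rewrite E => /imsetP [x]; rewrite inE => hx E';
      have := colB hc hx; rewrite -E' /= ltnn.
have := subset_leq_card sub; rewrite cardsC1 card_ord !cardsU1 cO notO //.
rewrite !inE negb_or n12 notO //=; lia.
Qed.

Lemma deg_cart (G H : sgraph) (u : G) (v : H) : deg u + deg v <= @deg (cart G H) (u, v).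
Proof.
rewrite /deg.
set A := [set (x, v) | x in [set x | sadj u x]].
set B := [set (u, y) | y in [set y | sadj v y]].
have cA : #|A| = #|[set x | sadj u x]| by rewrite card_in_imset // => x1 x2 _ _ [].
have cB : #|B| = #|[set y | sadj v y]| by rewrite card_in_imset // => x1 x2 _ _ [].
have dis : [disjoint A & B].
  apply/pred0P => -[a b] /=; apply/negP => /andP [/imsetP [x]]; rewrite inE => hx [-> ->].
  case/imsetP => y _ [E _]; by move: hx; rewrite E sadj_irr.
have := leq_card_setU A B; rewrite dis => -[_ /eqP E].
rewrite -cA -cB -E; apply: subset_leq_card; apply/subsetP => q; rewrite !inE.
case/orP => /imsetP [z]; rewrite inE => hz ->; rewrite /= /cart_adj /= ?eqxx ?hz //.
by rewrite orbT.
Qed.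

Theorem mainTheorem2 (G H H' : sgraph) :
  delta_plus_graph 1 G ->
  delta_plus_graph 1 H' -> regular H' -> subgraph H H' ->
  maxdeg H' - maxdeg H <= maxdeg G + 1 ->
  chi_i (cart G H) <= maxdeg (cart G H) + 2.
Proof.
move=> /existsP [cG hG] /existsP [cH hH] reg [f [finj fadj]] hdeg.
set k := maxdeg (cart G H).
suff Hc : incidence_colorable (cart G H) k.+2.
  by rewrite /chi_i addn2; case: ex_minnP => m _; apply.
set a := maxdeg G. set b := maxdeg H. set D := maxdeg H'.
have kdeg (u : G) (v : H) : deg u + deg v <= k.
  exact: leq_trans (deg_cart u v) (@maxdeg_ge (cart G H) (u, v)).
have Hav (u : G) (v : H) : a + deg v <= k.
  have : a <= k - deg v.
    by apply/bigmax_leqP => u' _; have := kdeg u' v; lia.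
  have := kdeg u v; lia.
have Hab (u : G) (v : H) : a + b <= k.
  have : a <= k - b.
    apply/bigmax_leqP => u' _.
    have : b <= k - deg u'.
      by apply/bigmax_leqP => v' _; have := kdeg u' v'; lia.
    have := kdeg u' v; have := maxdeg_ge v; rewrite -/b; lia.
  have := kdeg u v; have := Hav u v; 
  have : b <= k - deg u.
      by apply/bigmax_leqP => v' _; have := kdeg u v'; lia.
  lia.
pose bad (v : H) (j : nat) := [exists y, sadj v y &&
   ((val (cH (f v, f y)) == j) || (val (cH (f y, f v)) == j))].
pose S (v : H) := [set j : 'I_k.+2 | ~~ bad v j].
pose phi (v : H) (i : nat) := nth 0 (map val (enum (S v))) i.
have Ssize (u : G) (v : H) : a + 1 <= #|S v|.
  have cS : #|[set j : 'I_k.+2 | bad v j]| + #|S v| = k.+2.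
    transitivity #|'I_k.+2|; last by rewrite card_ord.
    have -> : S v = ~: [set j : 'I_k.+2 | bad v j] by apply/setP=> j; rewrite !inE.
    by rewrite cardsC.
  set A := [set inord (val (cH (f v, f y))) | y in [set y | sadj v y]] : {set 'I_k.+2}.
  set B := [set j : 'I_k.+2 | [exists y, sadj v y && (val (cH (f y, f v)) == j)]].
  have sub : [set j : 'I_k.+2 | bad v j] \subset A :|: B.
    apply/subsetP => j; rewrite !inE => /existsP [y /andP [hy /orP [h|h]]].
      apply/orP; left; apply/imsetP; exists y; first by rewrite inE.
      by rewrite (eqP h) inord_val.
    by apply/orP; right; apply/existsP; exists y; rewrite hy h.
  have cA : #|A| <= deg v by apply: leq_imset_card.
  have cB : #|B| <= 1.
    case: (set_0Vmem B) => [->|[j0 Hj0]]; first by rewrite cards0.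
    rewrite -(cards1 j0); apply: subset_leq_card; apply/subsetP => j.
    move: Hj0; rewrite /B !inE => /existsP [y0 /andP [hy0 /eqP E0]].
    rewrite ?inE => /existsP [y /andP [hy /eqP E]].
    apply/eqP; apply: ord_inj; rewrite -E -E0.
    congr val; apply: (missing reg hH); by rewrite sadj_sym; apply: fadj.
  have h1 := subset_leq_card sub; have [h2 _] := leq_card_setU A B.
  have h3 := Hav u v.
  have h4 : #|[set j : 'I_k.+2 | bad v j]| <= deg v + 1 := leq_trans h1 (leq_trans h2 (leq_add cA cB)).
  move: h4 cS h3; clear; lia.
have phiP (u : G) (v : H) (i : nat) : i < a + 1 -> phi v i < k.+2 /\ ~~ bad v (phi v i).
  move=> hi.
  have : phi v i \in map val (enum (S v)).
    by apply: mem_nth; rewrite size_map -cardE; apply: leq_trans (Ssize u v).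
  case/mapP => j; rewrite mem_enum inE => hj ->; split; [exact: ltn_ord | exact: hj].
have phi_inj (u : G) (v : H) (i i' : nat) : i < a + 1 -> i' < a + 1 ->
    phi v i = phi v i' -> i = i'.
  move=> hi hi' E; apply/eqP.
  rewrite -(@nth_uniq _ 0 (map val (enum (S v)))).
  - by move: E; rewrite /phi => ->.
  - by rewrite size_map -cardE; apply: leq_trans (Ssize u v).
  - by rewrite size_map -cardE; apply: leq_trans (Ssize u v).
  - by rewrite map_inj_uniq ?enum_uniq //; apply: val_inj.
pose col (pq : (G * H) * (G * H)) : nat :=
  if pq.1.2 == pq.2.2 then phi pq.1.2 (val (cG (pq.1.1, pq.2.1)))
  else val (cH (f pq.1.2, f pq.2.2)).
have colG (u1 u2 : G) (v : H) : col ((u1, v), (u2, v)) = phi v (cG (u1, u2)).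
  by rewrite /col /= eqxx.
have colH (u : G) (v1 v2 : H) : sadj v1 v2 -> col ((u, v1), (u, v2)) = val (cH (f v1, f v2)).
  by move=> h; rewrite /col /= ifN //; apply/eqP => E; move: h; rewrite E sadj_irr.
have cGb (u1 u2 : G) : sadj u1 u2 -> cG (u1, u2) < a + 1 := fun h => colB hG h.
have cHb (u : G) (v1 v2 : H) : sadj v1 v2 -> val (cH (f v1, f v2)) < k.+2.
  move=> h; have h1 := colB hH (fadj _ _ h); have h2 := Hab u v1.
  apply: (leq_trans h1); move: h2 hdeg; rewrite -/a -/b; lia.
have colb (p q : cart G H) : sadj p q -> col (p, q) < k.+2.
  move: p q => [u1 v1] [u2 v2]; rewrite /= /cart_adj /=.
  case/orP => [/andP [h /eqP <-] | /andP [/eqP <- h]].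
  - by rewrite colG; exact: (phiP u1 v1 _ (cGb _ _ h)).1.
  - by rewrite colH //; exact: cHb u1 _ _ h.
apply/existsP; exists [ffun pq : (cart G H) * (cart G H) => (inord (col pq) : 'I_k.+3)].
apply/andP; split.
  apply/forallP => p; apply/forallP => q; apply/implyP => h.
  by rewrite ffunE inordK; [exact: colb | exact: ltnW (colb _ _ h)].
apply/forallP => p; apply/forallP => q; apply/forallP => r; apply/forallP => s.
apply/implyP => /and4P [hpq hrs ne hi].
rewrite (inc_adjE hpq hrs) in hi.
rewrite !ffunE; apply/negP => /eqP /(congr1 (@nat_of_ord _)).
rewrite !inordK; [|exact: ltnW (colb _ _ hrs)|exact: ltnW (colb _ _ hpq)].
move: p q r s hpq hrs ne hi => [u1 v1] [u2 v2] [u3 v3] [u4 v4].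
rewrite /= /cart_adj /=.
case/orP => [/andP [h12 /eqP <-] | /andP [/eqP <- h12]];
case/orP => [/andP [h34 /eqP <-] | /andP [/eqP <- h34]] => ne hi.
-
  rewrite !colG.
  have ev : v1 = v3.
    by move: hi; rewrite !xpair_eqE; case: (v1 =P v3) => // _; rewrite !andbF.
  subst v3; rewrite !xpair_eqE !eqxx !andbT in ne hi.
  move=> E; have := phi_inj u1 v1 _ _ (cGb _ _ h12) (cGb _ _ h34) E => /ord_inj E'.
  have ne' : (u1, u2) != (u3, u4) by rewrite xpair_eqE.
  by move/eqP: (colP hG h12 h34 ne' hi).
-
  rewrite colG colH //.
  have [_ nb] := phiP u1 v1 _ (cGb _ _ h12).
  move=> E; move/negP: nb; apply; rewrite E.
  move: hi; rewrite !xpair_eqE.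
  case: (v1 =P v3) => [->|_]; first by move=> _; apply/existsP; exists v4; rewrite h34 eqxx.
  case: (v1 =P v4) => [->|_]; last by rewrite !andbF.
  by move=> _; apply/existsP; exists v3; rewrite sadj_sym h34 eqxx orbT.
-
  rewrite colG colH //.
  have [_ nb] := phiP u3 v3 _ (cGb _ _ h34).
  move=> E; move/negP: nb; apply; rewrite -E.
  move: hi; rewrite !xpair_eqE.
  case: (v1 =P v3) => [E1|_]; first by move=> _; subst v3; apply/existsP; exists v2; rewrite h12 eqxx.
  case: (v2 =P v3) => [E2|_]; last by rewrite !andbF.
  by move=> _; subst v3; apply/existsP; exists v1; rewrite sadj_sym h12 eqxx orbT.
-
  rewrite !colH //.
  have eu : u1 = u3.
    by move: hi; rewrite !xpair_eqE; case: (u1 =P u3) => // _.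
  subst u3; rewrite !xpair_eqE !eqxx /= in ne hi.
  move=> /ord_inj E.
  have ne' : (f v1, f v2) != (f v3, f v4) by rewrite xpair_eqE !(inj_eq finj).
  have hi' : [|| f v1 == f v3, f v2 == f v3 | f v1 == f v4] by rewrite !(inj_eq finj).
  by move/eqP: (colP hH (fadj _ _ h12) (fadj _ _ h34) ne' hi').
Qed.
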